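(* Let $A$ be a ring with an action of $S_n$ by ring automorphisms, and let $a_1,\dots,a_{n-1}$ be elements of the center $Z(A)$ such that $w(a_i)=a_j$ for all $w\in S_n$ and $1\le i,j<n$ with $w\{i,i+1\}=\{j,j+1\}$ (equivalently: $s_j(a_i)=a_i$ for $j\ne i-1,i+1$, and $s_{i+1}(a_i)=s_i(a_{i+1})$ for $1\le i\le n-2$). Let $R$ be the ring generated by $A$ and elements $\tilde\tau_1,\dots,\tilde\tau_{n-1}$ with defining relations: $A\to R$ is a ring homomorphism; $\tilde\tau_i\,a=s_i(a)\,\tilde\tau_i$ for $a\in A$; $\tilde\tau_i\tilde\tau_j=\tilde\tau_j\tilde\tau_i$ for $|i-j|>1$ and $\tilde\tau_{i+1}\tilde\tau_i\tilde\tau_{i+1}=\tilde\tau_i\tilde\tau_{i+1}\tilde\tau_i$; $\tilde\tau_i^2=a_i$. For a reduced expression $w=s_{i_1}\cdots s_{i_\ell}$ of $w\in S_n$ put $\tilde\tau_w=\tilde\tau_{i_1}\cdots\tilde\tau_{i_\ell}$. Then $\tilde\tau_w$ is independent of the choice of reduced expression, and the map $A\otimes\mathbb{Z}[S_n]\to R$, $a\otimes w\mapsto a\tilde\tau_w$, is a linear isomorphism.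
   Context: $s_i$ denotes the transposition $(i,i+1)\in S_n$. *)

(* Defs.v *)
From HB Require Import structures.
From mathcomp Require Import all_boot all_order all_algebra all_fingroup.
Set Implicit Arguments. Unset Strict Implicit. Unset Printing Implicit Defensive.
Import GRing.Theory.
Local Open Scope ring_scope.

(* Indices of the generators s_1..s_{n-1} are 0-based: i : 'I_n.-1 stands
   for s_{i+1}, the transposition of the points i and i+1 of 'I_n. *)
Lemma sgen_lo_proof n (i : 'I_n.-1) : (i < n)%N.
Proof. by rewrite (leq_trans (ltn_ord i)) // leq_pred. Qed.

Lemma sgen_hi_proof n (i : 'I_n.-1) : (i.+1 < n)%N.
Proof. by case: n i => [|n] [m Hm] //=. Qed.

Definition sgen_lo n (i : 'I_n.-1) : 'I_n := Ordinal (sgen_lo_proof i).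
Definition sgen_hi n (i : 'I_n.-1) : 'I_n := Ordinal (sgen_hi_proof i).

Definition sgen n (i : 'I_n.-1) : 'S_n := tperm (sgen_lo i) (sgen_hi i).

(* The permutation s_{i1} o s_{i2} o ... o s_{il} (composition of functions;
   note MathComp's product (u * v) x = v (u x)). *)
Fixpoint wprod n (s : seq 'I_n.-1) : 'S_n :=
  if s is i :: t then (wprod t * sgen i)%g else 1%g.

Definition reduced_expr n (w : 'S_n) (s : seq 'I_n.-1) : Prop :=
  wprod s = w /\ forall t : seq 'I_n.-1, wprod t = w -> (size s <= size t)%N.

Definition is_ringhom (R S : pzRingType) (g : R -> S) : Prop :=
  (forall x y, g (x + y) = g x + g y) /\
  (forall x y, g (x * y) = g x * g y) /\ g 1 = 1.

(* act is a (left, w.r.t. composition of permutations) action of S_n on A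
   by ring automorphisms *)
Definition is_ring_action n (A : pzRingType) (act : 'S_n -> A -> A) : Prop :=
  (forall w, is_ringhom (act w)) /\
  (forall x, act 1%g x = x) /\
  (forall (u v : 'S_n) x, act (u * v)%g x = act v (act u x)).

Definition tau_relations n (A : pzRingType) (act : 'S_n -> A -> A)
  (a : 'I_n.-1 -> A) (S : pzRingType) (f : A -> S) (t : 'I_n.-1 -> S) : Prop :=
  [/\ is_ringhom f,
      (forall i x, t i * f x = f (act (sgen i) x) * t i),
      (forall i j : 'I_n.-1, (i.+1 < j)%N || (j.+1 < i)%N -> t i * t j = t j * t i),
      (forall i j : 'I_n.-1, nat_of_ord j = i.+1 ->
          t j * t i * t j = t i * t j * t i)
    & (forall i, t i * t i = f (a i))].

(* R (with iota : A -> R and tau_i) is the ring generated by A and the tau_i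
   subject to the defining relations, i.e. it is the universal such ring. *)
Definition is_presented_ring n (A : pzRingType) (act : 'S_n -> A -> A)
  (a : 'I_n.-1 -> A) (R : pzRingType) (iota : A -> R) (tau : 'I_n.-1 -> R) : Prop :=
  tau_relations act a iota tau /\
  forall (S : pzRingType) (f : A -> S) (t : 'I_n.-1 -> S),
    tau_relations act a f t ->
    exists g : R -> S,
      (is_ringhom g /\ (forall x, g (iota x) = f x) /\ (forall i, g (tau i) = t i)) /\
      (forall g' : R -> S,
         is_ringhom g' /\ (forall x, g' (iota x) = f x) /\ (forall i, g' (tau i) = t i) ->
         g' =1 g).

Definition tau_word n (R : pzRingType) (tau : 'I_n.-1 -> R) (s : seq 'I_n.-1) : R :=
  \prod_(i <- s) tau i.

(* Main.v *)
Require Import Defs.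
From HB Require Import structures.
From mathcomp Require Import all_boot all_order all_algebra all_fingroup.
From mathcomp Require Import zify.
From Stdlib Require Import ClassicalEpsilon.
Import GRing.Theory.
Set Implicit Arguments. Unset Strict Implicit. Unset Printing Implicit Defensive.

Definition sw (i m : nat) := if m == i then i.+1 else if m == i.+1 then i else m.
Lemma swS i m : (m = i /\ sw i m = i.+1) \/ (m = i.+1 /\ sw i m = i) \/ (m <> i /\ m <> i.+1 /\ sw i m = m).
Proof. rewrite /sw; case: eqP => ?; first by left. case: eqP => ?; [by right; left| by right; right]. Qed.

Section Comb.
Variable n : nat.
Local Notation I := ('I_n.-1).
Local Notation lo := (@sgen_lo n).
Local Notation hi := (@sgen_hi n).
Local Notation s := (@sgen n).

Lemma sgenE (i : I) (x : 'I_n) : val (s i x) = sw i x.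
Proof.
rewrite /sgen /sw; case: tpermP => [->|->|].
- by rewrite /= eqxx.
- by rewrite /= eqxx; case: eqP => //= h; lia.
move=> h1 h2; case: eqP => h3; first by case: h1; apply: val_inj.
by case: eqP => h4 //; case: h2; apply: val_inj.
Qed.

Lemma s_ord (i : I) (x y : 'I_n) : sw i x = y -> s i x = y.
Proof. by move=> h; apply: val_inj; rewrite sgenE. Qed.

Lemma s2 (i : I) : (s i * s i = 1)%g.
Proof. exact: tperm2. Qed.

Lemma ssK (w : 'S_n) (i : I) : (w * s i * s i)%g = w.
Proof. by rewrite -mulgA s2 mulg1. Qed.

Definition far (i j : I) := ((i.+1 < j) || (j.+1 < i))%N.

Lemma sfar (i j : I) : far i j -> (s i * s j = s j * s i)%g.
Proof.
move=> h; apply/permP => x; apply: val_inj; rewrite !permM !sgenE.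
have := swS i x; have := swS j x; have := swS j (sw i x); have := swS i (sw j x).
move: h; rewrite /far; lia.
Qed.

Lemma sbraid (i j : I) : (j : nat) = i.+1 -> (s i * s j * s i = s j * s i * s j)%g.
Proof.
move=> h; apply/permP => x; apply: val_inj; rewrite !permM !sgenE.
have := swS i x; have := swS j x; have := swS j (sw i x); have := swS i (sw j x).
have := swS i (sw j (sw i x)); have := swS j (sw i (sw j x)). lia.
Qed.

Definition inv (p : 'S_n) : nat :=
  \sum_(xy : 'I_n * 'I_n) ((xy.1 < xy.2) && (p xy.2 < p xy.1))%N.
Definition len (w : 'S_n) := inv (w^-1)%g.
Definition D (w : 'S_n) (i : I) : bool := ((w^-1)%g (hi i) < (w^-1)%g (lo i))%N.

Lemma invsE (w : 'S_n) (i : I) x : ((w * s i)^-1)%g x = (w^-1)%g (s i x).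
Proof. by rewrite invMg permM /sgen tpermV. Qed.

Lemma inv_s (p : 'S_n) (i : I) :
  (inv (s i * p)%g + (p (hi i) < p (lo i)) = inv p + (p (lo i) < p (hi i)))%N.
Proof.
rewrite /inv (reindex_inj (h := fun xy : 'I_n * 'I_n => (s i xy.1, s i xy.2))); last first.
  by move=> [x y] [x' y'] /= [/perm_inj -> /perm_inj ->].
set c1 := (p (hi i) < p (lo i))%N; set c2 := (p (lo i) < p (hi i))%N.
have E1 : (c1 : nat) = \sum_(xy : 'I_n * 'I_n) (if xy == (lo i, hi i) then c1 : nat else 0%N).
  by rewrite -big_mkcond big_pred1_eq.
have E2 : (c2 : nat) = \sum_(xy : 'I_n * 'I_n) (if xy == (hi i, lo i) then c2 : nat else 0%N).
  by rewrite -big_mkcond big_pred1_eq.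
rewrite {}E1 {}E2 -!big_split /=; apply: eq_bigr => [[x y]] _ /=.
rewrite !permM !tpermK.
case: eqP => [[-> ->]|h1].
  rewrite /sgen tpermL tpermR /=.
  have Hne : ((lo i, hi i) == (hi i, lo i)) = false.
    apply/negbTE; rewrite xpair_eqE negb_and; apply/orP; left; apply/eqP => h.
    by have := congr1 (@nat_of_ord n) h => /=; lia.
  rewrite Hne (_ : (i.+1 < i)%N = false) ?ltnSn //; last by lia.
  by rewrite /c1; case: (_ < _)%N.
case: eqP => [[-> ->]|h2].
  rewrite /sgen tpermL tpermR /= /c2 ltnSn (_ : (i.+1 < i)%N = false) /=; last by lia.
  by case: (_ < _)%N.
rewrite !addn0; congr (nat_of_bool (_ && _)).
rewrite !sgenE.
have := swS i x; have := swS i y.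
have h3 : ~ ((x : nat) = i /\ (y : nat) = i.+1).
  by case=> a b; apply: h1; congr (_,_); apply: val_inj.
have h4 : ~ ((x : nat) = i.+1 /\ (y : nat) = i).
  by case=> a b; apply: h2; congr (_,_); apply: val_inj.
move: h3 h4; move=> h3 h4 h5 h6; apply/idP/idP; lia.
Qed.

Lemma D_ne (w : 'S_n) (i : I) : ((w^-1)%g (lo i) : nat) <> (w^-1)%g (hi i).
Proof. by move/val_inj/perm_inj/(congr1 (@nat_of_ord n)) => /=; lia. Qed.

Lemma lenS (w : 'S_n) (i : I) : (len (w * s i)%g + D w i = len w + ~~ D w i)%N.
Proof.
rewrite /len invMg /sgen tpermV inv_s; congr (_ + nat_of_bool _)%N.
have := @D_ne w i; rewrite /D; move: (_ (lo i)) (_ (hi i)) => a b h.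
apply/idP/idP; lia.
Qed.

Lemma DsS (w : 'S_n) (i : I) : D (w * s i)%g i = ~~ D w i.
Proof.
rewrite /D !invsE /sgen tpermL tpermR.
have := @D_ne w i; move: (_ (lo i)) (_ (hi i)) => a b h.
apply/idP/idP; lia.
Qed.

Lemma len1 : len 1 = 0%N.
Proof. rewrite /len invg1 /inv big1 // => [[x y]] _; rewrite !perm1 /=; apply/eqP; lia. Qed.

Lemma len_wprod (t : seq I) : (len (wprod t) <= size t)%N.
Proof. elim: t => [|i t IH] /=; first by rewrite len1. have := lenS (wprod t) i. lia. Qed.

Lemma no_descent (w : 'S_n) : (forall i, ~~ D w i) -> w = 1%g.
Proof.
move=> H; set p := (w^-1)%g.
have Hlt : forall i : I, (p (lo i) < p (hi i))%N.
  by move=> i; have := H i; have := @D_ne w i; rewrite /D -/p; lia.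
have Hge : forall m (x : 'I_n), (x : nat) = m -> (m <= p x)%N.
  elim=> [//|m IH] x hx.
  have hm : (m < n.-1)%N by have := ltn_ord x; lia.
  have := Hlt (Ordinal hm); have := IH (lo (Ordinal hm)) erefl.
  have -> : hi (Ordinal hm) = x by apply: val_inj; rewrite /= hx.
  lia.
have Hle : forall k (x : 'I_n), ((x : nat) + k = n.-1)%N -> (p x <= x)%N.
  elim=> [|k IH] x hx; first by have := ltn_ord (p x); lia.
  have hm : (x < n.-1)%N by lia.
  have := Hlt (Ordinal hm); have := IH (hi (Ordinal hm)) ltac:(rewrite /=; lia).
  have -> : lo (Ordinal hm) = x by apply: val_inj.
  rewrite /=; lia.
have Hp : p = 1%g.
  apply/permP => x; apply: val_inj; rewrite perm1 /=.
  have := Hge _ x erefl; have := Hle (n.-1 - x)%N x ltac:(have := ltn_ord x; lia). lia.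
by rewrite -(invgK w) -/p Hp invg1.
Qed.

Lemma exists_word (w : 'S_n) : exists t : seq I, wprod t = w /\ size t = len w.
Proof.
move hk: (len w) => k; elim: k w hk => [|k IH] w hk.
  case: (boolP [exists i, D w i]) => [/existsP [i Hi]|/existsPn H].
    by have := lenS w i; rewrite Hi; lia.
  by exists [::]; rewrite (no_descent H).
case: (boolP [exists i, D w i]) => [/existsP [i Hi]|/existsPn H]; last first.
  by move: hk; rewrite (no_descent H) len1.
have [t [ht1 ht2]] := IH (w * s i)%g ltac:(have := lenS w i; rewrite Hi; lia).
exists (i :: t); rewrite /= ht1 -mulgA s2 mulg1; split=> //; rewrite /= ht2.
have := lenS w i; rewrite Hi; lia.
Qed.

Lemma reducedP (w : 'S_n) (t : seq I) :
  reduced_expr w t <-> wprod t = w /\ size t = len w.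
Proof.
split.
  case=> h1 h2; split=> //; have [t0 [h3 h4]] := exists_word w.
  have := h2 t0 h3; have := len_wprod t; rewrite h1; lia.
case=> h1 h2; split=> // t' h; have := len_wprod t'; rewrite h; lia.
Qed.

Lemma s_fix (i j : I) : far i j -> s j (lo i) = lo i /\ s j (hi i) = hi i.
Proof.
rewrite /far => h; split; apply: s_ord; rewrite /=.
  by have := swS j i; lia.
by have := swS j i.+1; lia.
Qed.

Lemma D_far (w : 'S_n) (i j : I) : far i j -> D (w * s j)%g i = D w i.
Proof. by move=> h; rewrite /D !invsE; case: (s_fix h) => -> ->. Qed.

Lemma hi_lo (i j : I) : (j : nat) = i.+1 -> hi i = lo j.
Proof. by move=> h; apply: val_inj; rewrite /= h. Qed.

Lemma D_braid1 (w : 'S_n) (i j : I) : (j : nat) = i.+1 -> D w i -> D w j -> D (w * s i)%g j.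
Proof.
move=> h; rewrite /D !invsE.
rewrite (@s_ord i (hi j) (hi j)); last by rewrite /=; have := swS i j.+1; lia.
rewrite (@s_ord i (lo j) (lo i)); last by rewrite /=; have := swS i j; lia.
rewrite (hi_lo h); lia.
Qed.

Lemma D_braid2 (w : 'S_n) (i j : I) : (j : nat) = i.+1 -> D w i -> D w j -> D (w * s i * s j)%g i.
Proof.
move=> h; rewrite /D !invsE.
rewrite (@s_ord j (hi i) (hi j)); last by rewrite /=; have := swS j i.+1; lia.
rewrite (@s_ord j (lo i) (lo i)); last by rewrite /=; have := swS j i; lia.
rewrite (@s_ord i (hi j) (hi j)); last by rewrite /=; have := swS i j.+1; lia.
rewrite (@s_ord i (lo i) (hi i)); last by rewrite /=; have := swS i i; lia.
rewrite (hi_lo h); lia.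
Qed.

Lemma D_A (w : 'S_n) (i j : I) : (j : nat) = i.+1 -> D (w * s j * s i)%g j = D w i.
Proof.
move=> h; rewrite /D !invsE.
rewrite (@s_ord i (hi j) (hi j)); last by rewrite /=; have := swS i j.+1; lia.
rewrite (@s_ord j (hi j) (hi i)); last by rewrite /=; have := swS j j.+1; lia.
rewrite (@s_ord i (lo j) (lo i)); last by rewrite /=; have := swS i j; lia.
rewrite (@s_ord j (lo i) (lo i)); last by rewrite /=; have := swS j i; lia.
by [].
Qed.

Lemma D_B (w : 'S_n) (i j : I) : (j : nat) = i.+1 -> D (w * s i * s j)%g i = D w j.
Proof.
move=> h; rewrite /D !invsE.
rewrite (@s_ord j (hi i) (hi j)); last by rewrite /=; have := swS j i.+1; lia.
rewrite (@s_ord i (hi j) (hi j)); last by rewrite /=; have := swS i j.+1; lia.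
rewrite (@s_ord j (lo i) (lo i)); last by rewrite /=; have := swS j i; lia.
rewrite (@s_ord i (lo i) (lo j)); last by rewrite /=; have := swS i i; lia.
by [].
Qed.

Lemma D_C (w : 'S_n) (i j : I) : (j : nat) = i.+1 -> D (w * s j)%g i = D (w * s i)%g j.
Proof.
move=> h; rewrite /D !invsE.
rewrite (@s_ord j (hi i) (hi j)); last by rewrite /=; have := swS j i.+1; lia.
rewrite (@s_ord i (hi j) (hi j)); last by rewrite /=; have := swS i j.+1; lia.
rewrite (@s_ord j (lo i) (lo i)); last by rewrite /=; have := swS j i; lia.
rewrite (@s_ord i (lo j) (lo i)); last by rewrite /=; have := swS i j; lia.
by [].
Qed.

End Comb.


Section Mats.
Variable n : nat.
Local Notation I := ('I_n.-1).
Local Notation s := (@sgen n).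
Variable R : pzRingType.
Variable tau : I -> R.
Hypothesis Hcomm : forall i j : I, (i.+1 < j)%N || (j.+1 < i)%N -> (tau i * tau j = tau j * tau i)%R.
Hypothesis Hbraid : forall i j : I, nat_of_ord j = i.+1 -> (tau j * tau i * tau j = tau i * tau j * tau i)%R.
Local Notation F := (tau_word tau).

Lemma F_cons i t : F (i :: t) = (tau i * F t)%R.
Proof. by rewrite /tau_word big_cons. Qed.

Definition Pk k := forall t1 t2 : seq I, size t1 = k -> size t2 = k ->
  wprod t1 = wprod t2 -> len (wprod t1) = k -> F t1 = F t2.

Lemma head_descent (i : I) t : len (wprod (i :: t)) = size (i :: t) ->
  D (wprod (i :: t)) i /\ len (wprod t) = size t.
Proof.
move=> /= h; have := lenS (wprod t * s i)%g i; rewrite -mulgA s2 mulg1.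
have := len_wprod t; have := lenS (wprod t) i; rewrite DsS.
case: (D _ i) => /=; lia.
Qed.

Lemma mats_lt k (IH : forall k', (k' < k)%N -> Pk k') (i j : I) t1 t2 :
  (i < j)%N -> size t1 = k.-1 -> size t2 = k.-1 -> (0 < k)%N ->
  (wprod t1 * s i = wprod t2 * s j)%g -> len (wprod t1 * s i)%g = k ->
  F (i :: t1) = F (j :: t2).
Proof.
move=> hij h1 h2 hk heq hl.
move: heq hl; move Ew: (wprod t1 * s i)%g => w heq hl.
have [Di l1] : D w i /\ len (wprod t1) = size t1.
  by rewrite -Ew; apply: head_descent; rewrite /= Ew hl h1; lia.
have [Dj l2] : D w j /\ len (wprod t2) = size t2.
  by rewrite heq; apply: head_descent; rewrite /= -heq hl h2; lia.
have ew1 : wprod t1 = (w * s i)%g by rewrite -Ew -mulgA s2 mulg1.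
have ew2 : wprod t2 = (w * s j)%g by rewrite heq -mulgA s2 mulg1.
rewrite !F_cons.
case: (ltnP i.+1 j) => hf.
  have hfar : far i j by rewrite /far hf.
  have Dj' : D (w * s i)%g j by rewrite D_far //; rewrite /far; lia.
  have [r [hr1 hr2]] := exists_word (w * s i * s j)%g.
  have lr : (len (w * s i * s j)%g).+2 = k.
    have := lenS (w * s i)%g j; have := lenS w i; rewrite Di Dj'. lia.
  have E1 : F t1 = F (j :: r).
    apply: (IH (k.-1)); [lia|lia|rewrite /=; lia| |lia].
    by rewrite /= hr1 -mulgA s2 mulg1 ew1.
  have E2 : F t2 = F (i :: r).
    apply: (IH (k.-1)); [lia|lia|rewrite /=; lia| |lia].
    by rewrite /= hr1 ew2 -mulgA -(sfar hfar) mulgA -(mulgA w) s2 mulg1.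
  rewrite E1 E2 !F_cons !mulrA Hcomm //; lia.
have hj : nat_of_ord j = i.+1 by lia.
have Dj' : D (w * s i)%g j by apply: D_braid1.
have Di'' : D (w * s i * s j)%g i by apply: D_braid2.
have [r [hr1 hr2]] := exists_word (w * s i * s j * s i)%g.
have lr : (len (w * s i * s j * s i)%g).+3 = k.
  have := lenS (w * s i * s j)%g i; have := lenS (w * s i)%g j; have := lenS w i.
  rewrite Di Dj' Di''; lia.
have E1 : F t1 = F (j :: i :: r).
  apply: (IH (k.-1)); [lia|lia|rewrite /=; lia| |lia].
  by rewrite /= hr1 ew1 -!mulgA (mulgA (s i) (s i)) s2 mul1g s2 mulg1.
have E2 : F t2 = F (i :: j :: r).
  apply: (IH (k.-1)); [lia|lia|rewrite /=; lia| |lia].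
  have e : (w * s i * s j * s i = w * s j * s i * s j)%g.
    by rewrite -!mulgA (mulgA (s i)) (sbraid hj) !mulgA.
  by rewrite /= hr1 e ew2 -!mulgA (mulgA (s j) (s j)) s2 mul1g s2 mulg1.
by rewrite E1 E2 !F_cons !mulrA (Hbraid hj).
Qed.

Lemma mats k : Pk k.
Proof.
elim/ltn_ind: k => k IH t1 t2.
case: t1 => [|i t1]; case: t2 => [|j t2] //=; try by move=> <-.
move=> h1 h2 heq hl.
case: (ltngtP i j) => hij.
- by apply: (mats_lt IH) => //=; lia.
- symmetry; apply: (mats_lt IH) => //=; try lia; by rewrite -heq.
move: hij heq hl => /val_inj <- heq hl.
have ht : wprod t1 = wprod t2 by move: (congr1 (fun x => x * s i)%g heq); rewrite -!mulgA s2 !mulg1.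
rewrite !F_cons; congr (_ * _)%R.
apply: (IH (k.-1)); try lia; first done.
have := head_descent (i := i) (t := t1); rewrite /= hl h1 => /(_ erefl) [_]; lia.
Qed.

End Mats.

Local Open Scope ring_scope.

Section Kern.
Variable (A : pzRingType) (T : finType).
Definition mx (K : T -> T -> A) : 'M[A]_#|T| := \matrix_(i, j) K (enum_val i) (enum_val j).
Definition kmul (K L : T -> T -> A) u w := \sum_v K u v * L v w.

Lemma mxE' K u w : mx K (enum_rank u) (enum_rank w) = K u w.
Proof. by rewrite mxE !enum_rankK. Qed.

Lemma sum_T (F : 'I_#|T| -> A) : \sum_k F k = \sum_v F (enum_rank v).
Proof. exact: (reindex enum_rank (onW_bij _ (enum_rank_bij T))). Qed.

Lemma mx_mul K L : mx K * mx L = mx (kmul K L).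
Proof.
apply/matrixP => i j; rewrite -mulmxE !mxE sum_T /kmul.
by apply: eq_bigr => v _; rewrite !mxE enum_rankK.
Qed.

Lemma mx_add K L : mx K + mx L = mx (fun u w => K u w + L u w).
Proof. by apply/matrixP => i j; rewrite !mxE. Qed.

Lemma mx_ext K L : (forall u w, K u w = L u w) -> mx K = mx L.
Proof. by move=> h; apply/matrixP => i j; rewrite !mxE h. Qed.

Lemma mx_one K : (forall u w, K u w = (u == w)%:R) -> mx K = 1.
Proof.
move=> h; apply/matrixP => i j; rewrite !mxE h.
by rewrite (inj_eq enum_val_inj).
Qed.

Lemma mul_entry K (M : 'M[A]_#|T|) u w :
  (mx K * M) (enum_rank u) (enum_rank w) = \sum_v K u v * M (enum_rank v) (enum_rank w).
Proof. by rewrite -mulmxE !mxE sum_T; apply: eq_bigr => v _; rewrite mxE' . Qed.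

Lemma sum_kron (F : T -> A) x : \sum_v (if v == x then F v else 0) = F x.
Proof. by rewrite -big_mkcond big_pred1_eq. Qed.

End Kern.

Section Model.
Variable n : nat.
Local Notation I := ('I_n.-1).
Local Notation s := (@sgen n).
Variable A : pzRingType.
Variable act : 'S_n -> A -> A.
Variable a : I -> A.
Hypothesis Hact : is_ring_action act.
Hypothesis Hcent : forall (i : I) (x : A), a i * x = x * a i.
Hypothesis Hequiv : forall (w : 'S_n) (i j : I),
      w @: [set sgen_lo i; sgen_hi i] = [set sgen_lo j; sgen_hi j] ->
      act w (a i) = a j.

Lemma ractD w x y : act w (x + y) = act w x + act w y.
Proof. by case: Hact => h _; case: (h w). Qed.
Lemma ractMr w x y : act w (x * y) = act w x * act w y.
Proof. by case: Hact => h _; case: (h w) => _ []. Qed.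
Lemma ract_one w : act w 1 = 1.
Proof. by case: Hact => h _; case: (h w) => _ []. Qed.
Lemma ract1 x : act 1%g x = x.
Proof. by case: Hact => _ []. Qed.
Lemma ractM u v x : act (u * v)%g x = act v (act u x).
Proof. by case: Hact => _ [] _. Qed.
Lemma ract0 w : act w 0 = 0.
Proof. by apply: (@addrI _ (act w 0)); rewrite -ractD !addr0. Qed.
Lemma ractK w x : act w (act (w^-1)%g x) = x.
Proof. by rewrite -ractM mulVg ract1. Qed.
Lemma ractKV w x : act (w^-1)%g (act w x) = x.
Proof. by rewrite -ractM mulgV ract1. Qed.
Lemma ract_inj w : injective (act w).
Proof. by move=> x y h; rewrite -(ractKV w x) h ractKV. Qed.

Definition central (y : A) := forall z, y * z = z * y.
Lemma central_act w i : central (act w (a i)).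
Proof. by move=> z; rewrite -(ractK w z) -ractMr Hcent ractMr !ractK. Qed.

Lemma act_invs w i x : act ((w * s i)^-1)%g x = act (w^-1)%g (act (s i) x).
Proof. by rewrite invMg ractM /sgen tpermV. Qed.

Lemma H1 (i : I) : act (s i) (a i) = a i.
Proof.
apply: Hequiv; rewrite imsetU1 imset_set1 /sgen tpermL tpermR.
by apply/setP => x; rewrite !inE orbC.
Qed.

Lemma H2 (i j : I) : far i j -> act (s j) (a i) = a i.
Proof.
move=> h; apply: Hequiv; rewrite imsetU1 imset_set1.
by case: (s_fix h) => -> ->.
Qed.

Lemma H3 (i j : I) : (j : nat) = i.+1 -> act (s j) (a i) = act (s i) (a j).
Proof.
move=> h.
have e : act (s j * s i)%g (a i) = a j.
  apply: Hequiv; rewrite imsetU1 imset_set1 !permM.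
  rewrite (@s_ord _ j (sgen_lo i) (sgen_lo i)); last by rewrite /=; have := swS j i; lia.
  rewrite (@s_ord _ i (sgen_lo i) (sgen_lo j)); last by rewrite /=; have := swS i i; lia.
  rewrite (@s_ord _ j (sgen_hi i) (sgen_hi j)); last by rewrite /=; have := swS j i.+1; lia.
  rewrite (@s_ord _ i (sgen_hi j) (sgen_hi j)); last by rewrite /=; have := swS i j.+1; lia.
  by [].
by rewrite -e ractM -ractM s2 ract1.
Qed.

Definition kap (i : I) (v : 'S_n) : A := if D v i then act (v^-1)%g (a i) else 1.
Lemma kap_central i v : central (kap i v).
Proof. by rewrite /kap; case: (D v i); [exact: central_act | move=> z; rewrite mul1r mulr1]. Qed.

Definition fk (x : A) (u w : 'S_n) : A := if u == w then act (u^-1)%g x else 0.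
Definition tk (i : I) (u w : 'S_n) : A := if u == (w * s i)%g then kap i w else 0.

Lemma eq_ms (i : I) (u v : 'S_n) : (u == (v * s i)%g) = (v == (u * s i)%g).
Proof.
by apply/eqP/eqP => ->; rewrite -mulgA s2 mulg1.
Qed.

Lemma eq_sR (i : I) (x y : 'S_n) : ((x * s i)%g == y) = (x == (y * s i)%g).
Proof. by apply/eqP/eqP => [<-|->]; rewrite -mulgA s2 mulg1. Qed.

Lemma kmul_tk i L u w : kmul (tk i) L u w = kap i (u * s i) * L (u * s i)%g w.
Proof.
rewrite /kmul -(sum_kron (fun v => kap i v * L v w) (u * s i)%g).
by apply: eq_bigr => v _; rewrite /tk eq_ms; case: eqP => _ //; rewrite mul0r.
Qed.

Lemma kmul_fk x L u w : kmul (fk x) L u w = act (u^-1)%g x * L u w.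
Proof.
rewrite /kmul -(sum_kron (fun v => act (u^-1)%g x * L v w) u).
by apply: eq_bigr => v _; rewrite /fk eq_sym; case: eqP => [->|_] //; rewrite mul0r.
Qed.

Definition fm x : 'M[A]_#|{perm 'I_n}| := mx (fk x).
Definition tm i : 'M[A]_#|{perm 'I_n}| := mx (tk i).

Lemma kap_far i j w : far i j -> kap i (w * s j)%g = kap i w.
Proof. by move=> h; rewrite /kap D_far // act_invs H2. Qed.

Lemma far_sym (i j : I) : far i j -> far j i.
Proof. by rewrite /far orbC. Qed.

Lemma model_rel : tau_relations act a fm tm.
Proof.
split.
- split; [|split].
  + by move=> x y; rewrite /fm mx_add; apply: mx_ext => u w; rewrite /fk; case: eqP => //; rewrite ?ractD ?addr0.
  + move=> x y; rewrite /fm mx_mul; apply: mx_ext => u w; rewrite kmul_fk /fk.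
    by case: eqP => _; rewrite ?ractMr ?mulr0 ?mul0r.
  + by apply: mx_one => u w; rewrite /fk; case: eqP => _; rewrite ?ract_one.
- move=> i x; rewrite /fm /tm !mx_mul; apply: mx_ext => u w.
  rewrite kmul_tk kmul_fk /fk /tk -eq_ms [w == _]eq_sym.
  case: eqP => [<-|_]; last by rewrite !mulr0.
  by rewrite act_invs kap_central.
- move=> i j hf; rewrite /tm !mx_mul; apply: mx_ext => u w.
  rewrite !kmul_tk /tk !eq_sR.
  have -> : (w * s i * s j)%g = (w * s j * s i)%g by rewrite -!mulgA (sfar hf).
  case: eqP => [hu|_]; last by rewrite !mulr0.
  rewrite hu ssK -mulgA (sfar hf) mulgA ssK.
  rewrite (kap_far _ hf) (kap_far _ (far_sym hf)).
  exact: kap_central.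
- move=> i j hj; rewrite /tm -!mulrA !mx_mul; apply: mx_ext => u w.
  rewrite !kmul_tk /tk !eq_sR.
  have hb : (w * s j * s i * s j = w * s i * s j * s i)%g.
    by rewrite -!mulgA (mulgA (s i)) (mulgA (s j)) (sbraid hj).
  rewrite hb.
  case: eqP => [hu|_]; last by rewrite !mulr0.
  have hu1 : (u * s j)%g = (w * s j * s i)%g by rewrite hu -hb -mulgA s2 mulg1.
  have hu2 : (u * s i)%g = (w * s i * s j)%g by rewrite hu -mulgA s2 mulg1.
  have hu3 : (w * s j * s i * s i)%g = (w * s j)%g by rewrite -mulgA s2 mulg1.
  have hu4 : (w * s i * s j * s j)%g = (w * s i)%g by rewrite -mulgA s2 mulg1.
  rewrite hu1 hu2 hu3 hu4.
  have kA : kap j (w * s j * s i)%g = kap i w.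
    by rewrite /kap (D_A _ hj) !act_invs -(H3 hj) -(ractM (s j) (s j)) s2 ract1.
  have kB : kap i (w * s i * s j)%g = kap j w.
    by rewrite /kap (D_B _ hj) !act_invs (H3 hj) -(ractM (s i) (s i)) s2 ract1.
  have kC : kap i (w * s j)%g = kap j (w * s i)%g.
    by rewrite /kap (D_C _ hj) !act_invs (H3 hj).
  rewrite kA kB kC !mulrA (kap_central i w) -!mulrA (kap_central i w).
  by rewrite mulrA -(kap_central j w) -mulrA.
- move=> i; rewrite /tm /fm mx_mul; apply: mx_ext => u w.
  rewrite kmul_tk /tk /fk eq_sR ssK.
  case: eqP => [->|_]; last by rewrite mulr0.
  rewrite /kap DsS; case: (D w i) => /=; first by rewrite mul1r.
  by rewrite mulr1 act_invs H1.
Qed.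

End Model.

Local Open Scope ring_scope.

Section Main.
Variable n : nat.
Local Notation I := ('I_n.-1).
Local Notation s := (@sgen n).
Variable A : pzRingType.
Variable act : 'S_n -> A -> A.
Variable a : I -> A.
Hypothesis Hact : is_ring_action act.
Hypothesis Hcent : forall (i : I) (x : A), a i * x = x * a i.
Hypothesis Hequiv : forall (w : 'S_n) (i j : I),
      w @: [set sgen_lo i; sgen_hi i] = [set sgen_lo j; sgen_hi j] ->
      act w (a i) = a j.
Variable R : pzRingType.
Variable iota : A -> R.
Variable tau : I -> R.
Hypothesis HR : is_presented_ring act a iota tau.
Local Notation F := (tau_word tau).

Lemma rels : tau_relations act a iota tau.
Proof. by case: HR. Qed.

Lemma iotaD x y : iota (x + y) = iota x + iota y.
Proof. by case: rels => -[]. Qed.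
Lemma iotaM x y : iota (x * y) = iota x * iota y.
Proof. by case: rels => -[] _ []. Qed.
Lemma iota1 : iota 1 = 1.
Proof. by case: rels => -[] _ []. Qed.
Lemma iota0 : iota 0 = 0.
Proof. by apply: (@addrI _ (iota 0)); rewrite -iotaD !addr0. Qed.
Lemma iotaN x : iota (- x) = - iota x.
Proof. by apply: (@addrI _ (iota x)); rewrite -iotaD !subrr iota0. Qed.
Lemma tau_iota i x : tau i * iota x = iota (act (s i) x) * tau i.
Proof. by case: rels => _ h _ _ _; apply: h. Qed.
Lemma tau_comm (i j : I) : (i.+1 < j)%N || (j.+1 < i)%N -> tau i * tau j = tau j * tau i.
Proof. by case: rels => _ _ h _ _; apply: h. Qed.
Lemma tau_braid (i j : I) : nat_of_ord j = i.+1 -> tau j * tau i * tau j = tau i * tau j * tau i.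
Proof. case: rels => _ _ _ h _. exact: (h i j). Qed.
Lemma tau_sq i : tau i * tau i = iota (a i).
Proof. by case: rels => _ _ _ _ h; apply: h. Qed.

Definition rw (w : 'S_n) : seq I := proj1_sig (constructive_indefinite_description _ (exists_word w)).
Lemma rw_spec w : wprod (rw w) = w /\ size (rw w) = len w.
Proof. exact: (proj2_sig (constructive_indefinite_description _ (exists_word w))). Qed.

Definition T w := F (rw w).

Lemma T_red w t : reduced_expr w t -> T w = F t.
Proof.
move/reducedP => [h1 h2]; case: (rw_spec w) => h3 h4.
apply: (@mats n R tau tau_comm tau_braid (len w)) => //; by rewrite ?h1 ?h3.
Qed.

Lemma F_iota t x : F t * iota x = iota (act (wprod t) x) * F t.
Proof.
elim: t x => [|i t IH] x /=.
  by rewrite /tau_word big_nil (ract1 Hact) mul1r mulr1.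
by rewrite !F_cons -mulrA IH mulrA tau_iota -mulrA (ractM Hact).
Qed.

Lemma T_iota w x : T w * iota x = iota (act w x) * T w.
Proof. by rewrite /T F_iota; case: (rw_spec w) => ->. Qed.

Lemma T1 : T 1%g = 1.
Proof.
case: (rw_spec 1%g) => _; rewrite len1 /T; case: (rw 1%g) => //= _.
by rewrite /tau_word big_nil.
Qed.

Lemma T_asc w i : ~~ D w i -> tau i * T w = T (w * s i)%g.
Proof.
move=> hD; rewrite /T -F_cons; symmetry; apply: T_red; apply/reducedP.
case: (rw_spec w) => h1 h2; rewrite /= h1; split=> //.
have := lenS w i; rewrite (negbTE hD) h2 /=; lia.
Qed.

Lemma T_desc w i : D w i -> tau i * T w = iota (a i) * T (w * s i)%g.
Proof.
move=> hD; have hu : ~~ D (w * s i)%g i by rewrite DsS hD.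
by rewrite -{1}(ssK w i) -(T_asc hu) mulrA tau_sq.
Qed.

Definition Phi (c : {ffun 'S_n -> A}) : R := \sum_w iota (c w) * T w.

Lemma Phi0 : Phi 0 = 0.
Proof. by rewrite /Phi big1 // => w _; rewrite ffunE iota0 mul0r. Qed.
Lemma PhiD c d : Phi (c + d) = Phi c + Phi d.
Proof. by rewrite /Phi -big_split; apply: eq_bigr => w _; rewrite ffunE iotaD mulrDl. Qed.
Lemma PhiN c : Phi (- c) = - Phi c.
Proof. by rewrite /Phi -sumrN; apply: eq_bigr => w _; rewrite ffunE iotaN mulNr. Qed.
Lemma Phi_scale x c : iota x * Phi c = Phi [ffun w => x * c w].
Proof. by rewrite /Phi mulr_sumr; apply: eq_bigr => w _; rewrite ffunE iotaM mulrA. Qed.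

Lemma Phi_tau i c : tau i * Phi c =
  Phi [ffun u => act (s i) (c (u * s i)%g) * (if D (u * s i)%g i then a i else 1)].
Proof.
rewrite /Phi mulr_sumr [RHS](reindex_inj (mulIg (s i))) /=.
apply: eq_bigr => w _; rewrite ffunE ssK mulrA tau_iota -mulrA.
case hD: (D w i).
  by rewrite (T_desc hD) mulrA iotaM.
by rewrite (T_asc (negbT hD)) mulr1.
Qed.

Definition Vp (r : R) := exists c, Phi c = r.

Lemma V_word t c : Vp (F t * Phi c).
Proof.
elim: t c => [|i t IH] c.
  by exists c; rewrite /tau_word big_nil mul1r.
rewrite F_cons -mulrA; case: (IH c) => d <-.
by eexists; rewrite Phi_tau.
Qed.

Lemma V_sum (G : 'S_n -> R) : (forall w, Vp (G w)) -> Vp (\sum_w G w).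
Proof.
move=> h; apply: (big_ind Vp) => //.
- by exists 0; rewrite Phi0.
- by move=> x y [c <-] [d <-]; exists (c + d); rewrite PhiD.
Qed.

Lemma V_mul c d : Vp (Phi c * Phi d).
Proof.
rewrite {1}/Phi mulr_suml; apply: V_sum => w.
rewrite -mulrA; case: (V_word (rw w) d) => e he; rewrite /T -he.
by eexists; rewrite Phi_scale.
Qed.

Lemma V_one : Vp 1.
Proof.
exists [ffun w => if w == 1%g then 1 else 0].
rewrite /Phi (bigD1 1%g) //= big1 ?addr0.
  by rewrite ffunE eqxx iota1 T1 mulr1.
by move=> w /negbTE h; rewrite ffunE h iota0 mul0r.
Qed.

Definition Vb (r : R) : bool := if excluded_middle_informative (Vp r) then true else false.
Lemma VbP r : Vb r <-> Vp r.
Proof. by rewrite /Vb; case: excluded_middle_informative. Qed.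

Lemma Vclosed : GRing.subring_closed Vb.
Proof.
split.
- by apply/VbP; exact: V_one.
- move=> x y /VbP [c <-] /VbP [d <-]; apply/VbP.
  by exists (c - d); rewrite PhiD PhiN.
- move=> x y /VbP [c <-] /VbP [d <-]; apply/VbP; exact: V_mul.
Qed.

Definition subR := {r : R | Vb r}.
HB.instance Definition _ := [isSub for (@proj1_sig R Vb : subR -> R)].
HB.instance Definition _ := [Choice of subR by <:].
HB.instance Definition _ := GRing.SubChoice_isSubPzRing.Build R Vb subR Vclosed.

Lemma svalD (x y : subR) : val (x + y) = val x + val y. Proof. by []. Qed.
Lemma svalM (x y : subR) : val (x * y) = val x * val y. Proof. by []. Qed.
Lemma sval1 : val (1 : subR) = 1. Proof. by []. Qed.

Lemma V_all r : Vp r.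
Proof.
have [c1 hc1] := V_one.
have hi x : Vb (iota x).
  by apply/VbP; exists [ffun w => x * c1 w]; rewrite -Phi_scale hc1 mulr1.
have ht i : Vb (tau i).
  apply/VbP; have := V_word [:: i] c1.
  by rewrite hc1 mulr1 F_cons /tau_word big_nil mulr1.
pose f : A -> subR := fun x => exist _ (iota x) (hi x).
pose t : I -> subR := fun i => exist _ (tau i) (ht i).
have rel : tau_relations act a f t.
  case: rels => [[h1 [h2 h3]] h4 h5 h6 h7].
  split.
  - split; [|split].
    + by move=> x y; apply: val_inj; rewrite svalD /= h1.
    + by move=> x y; apply: val_inj; rewrite svalM /= h2.
    + by apply: val_inj; rewrite sval1 /= h3.
  - by move=> i x; apply: val_inj; rewrite !svalM /= h4.
  - by move=> i j hij; apply: val_inj; rewrite !svalM /= h5.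
  - by move=> i j hij; apply: val_inj; rewrite !svalM /= h6.
  - by move=> i; apply: val_inj; rewrite !svalM /= h7.
case: HR => _ univ.
have [g [[[gD [gM g1]] [gf gt]] _]] := univ _ f t rel.
have [g0 [_ uniq]] := univ _ iota tau rels.
have e1 : (fun r => val (g r)) =1 g0.
  apply: uniq; split; [split; [|split]|split].
  - by move=> x y; rewrite gD svalD.
  - by move=> x y; rewrite gM svalM.
  - by rewrite g1 sval1.
  - by move=> x; rewrite gf.
  - by move=> i; rewrite gt.
have e2 : id =1 g0.
  by apply: uniq; split; [split; [|split]|split].
have : val (g r) = r by rewrite (e1 r) -(e2 r).
by move=> <-; apply/VbP; exact: valP.
Qed.

(* injectivity via the matrix model *)
Lemma Phi_inj : injective Phi.
Proof.
case: HR => _ univ.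
have [g [[[gD [gM g1]] [gf gt]] _]] := univ _ _ _ (model_rel Hact Hcent Hequiv).
have g0 : g 0 = 0 by apply: (@addrI _ (g 0)); rewrite -gD !addr0.
have gsum (G : 'S_n -> R) : g (\sum_w G w) = \sum_w g (G w).
  exact: (big_morph g gD g0).
have gw : forall t, len (wprod t) = size t -> forall u,
    g (F t) (enum_rank u) (enum_rank 1%g) = (u == wprod t)%:R.
  elim=> [|i t IH] ht u.
    by rewrite /tau_word big_nil g1 mxE (inj_eq enum_rank_inj).
  have [hD ht'] := head_descent ht.
  rewrite F_cons gM gt /tm mul_entry.
  under eq_bigr => v _ do rewrite (IH ht') mulr_natr mulrb.
  rewrite sum_kron /tk /=; move: hD; rewrite /= DsS /kap.
  by case: (D (wprod t) i) => //= _; case: eqP.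
move=> c d h; apply/ffunP => w.
have gT v u : g (T v) (enum_rank u) (enum_rank 1%g) = (u == v)%:R.
  case: (rw_spec v) => h1 h2; rewrite /T (gw (rw v)) ?h1 //; by rewrite h1 h2.
have gP (e : {ffun 'S_n -> A}) : g (Phi e) (enum_rank w) (enum_rank 1%g) = act (w^-1)%g (e w).
  rewrite gsum summxE.
  under eq_bigr => v _ do rewrite gM gf /fm mul_entry.
  under eq_bigr => v _ do under eq_bigr => x _ do rewrite gT mulr_natr mulrb.
  under eq_bigr => v _ do rewrite sum_kron.
  rewrite /fk; under eq_bigr => v _ do rewrite eq_sym.
  by rewrite sum_kron.
by have := gP c; rewrite h gP => /(ract_inj Hact).
Qed.

End Main.

Unset Implicit Arguments.
Local Open Scope ring_scope.


Theorem mainTheorem8 (n : nat) (A : pzRingType) (act : 'S_n -> A -> A)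
  (a : 'I_n.-1 -> A)
  (Hact : is_ring_action act)
  (Hcent : forall (i : 'I_n.-1) (x : A), a i * x = x * a i)
  (Hequiv : forall (w : 'S_n) (i j : 'I_n.-1),
      w @: [set sgen_lo i; sgen_hi i] = [set sgen_lo j; sgen_hi j] ->
      act w (a i) = a j)
  (R : pzRingType) (iota : A -> R) (tau : 'I_n.-1 -> R)
  (HR : is_presented_ring act a iota tau) :
  (forall w : 'S_n, exists s, reduced_expr w s) /\
  (forall (w : 'S_n) (s1 s2 : seq 'I_n.-1),
      reduced_expr w s1 -> reduced_expr w s2 -> tau_word tau s1 = tau_word tau s2) /\
  (exists T : 'S_n -> R,
      (forall (w : 'S_n) s, reduced_expr w s -> T w = tau_word tau s) /\
      bijective (fun c : {ffun 'S_n -> A} => \sum_(w : 'S_n) iota (c w) * T w)).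
Proof.
split.
  move=> w; have [t [h1 h2]] := exists_word w; exists t; exact/reducedP.
split.
  by move=> w s1 s2 r1 r2; rewrite -(T_red HR r1) -(T_red HR r2).
exists (T tau); split; first by move=> w t /(T_red HR).
pose pick r := proj1_sig (constructive_indefinite_description _ (V_all HR r)).
have pickP r : Phi iota tau (pick r) = r.
  exact: (proj2_sig (constructive_indefinite_description _ (V_all HR r))).
exists pick.
  by move=> c; apply: (Phi_inj Hact Hcent Hequiv HR); rewrite pickP.
by move=> r; exact: pickP.
Qed.
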